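(* Let $X$ be a compact topological space equipped with a continuous action of an infinite strongly sofic monoid $M$, and let $\Sigma=(D_i,\sigma_i)_{i\in I}$ be a strong sofic approximation of $M$. If $\rho$ and $\rho'$ are dynamically generating continuous pseudometrics for $(X,M)$, then $h_\Sigma(X,M,\rho)=h_\Sigma(X,M,\rho')$.
   Context: Hamming metric on $\operatorname{Map}(D)$ (maps $D\to D$, $D$ finite non-empty): $d_D^{\mathrm{Ham}}(f,g)=\frac{1}{|D|}|\{v:f(v)\ne g(v)\}|$. A strong sofic approximation of $M$ is a net $(D_i,\sigma_i)_{i\in I}$ over a directed set, $D_i$ non-empty finite, $\sigma_i\colon M\to\operatorname{Map}(D_i)$, with $\sigma_i(1_M)=\mathrm{Id}_{D_i}$; $\lim_i d^{\mathrm{Ham}}_{D_i}(\sigma_i(m_1m_2),\sigma_i(m_1)\sigma_i(m_2))=0$ for all $m_1,m_2$; $\lim_i d^{\mathrm{Ham}}_{D_i}(\sigma_i(m_1),\sigma_i(m_2))=1$ for distinct $m_1,m_2$; and for every finite $K\subset M$ an integer $\Delta_K\ge1$ with $|\sigma_i(k)^{-1}(v)|\le\Delta_K$ for all $i$, $k\in K$, $v\in D_i$. A monoid is strongly sofic iff it has one. A pseudometric $\rho$ is dynamically generating if for distinct $x,y\in X$ some $m\in M$ has $\rho(mx,my)>0$. For non-empty finite $D$, on $X^D$: $\rho_2^D(\varphi,\psi)=(\frac{1}{|D|}\sum_v\rho(\varphi(v),\psi(v))^2)^{1/2}$, $\rho_\infty^D(\varphi,\psi)=\max_v\rho(\varphi(v),\psi(v))$,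 $(m\varphi)(v)=m\varphi(v)$. For finite $F\subset M$, $\delta>0$, $\sigma\colon M\to\operatorname{Map}(D)$: $\operatorname{Map}(X,M,\rho,F,\delta,\sigma)=\{\varphi\in X^D:\rho_2^D(\varphi\circ\sigma(m),m\varphi)\le\delta\ \forall m\in F\}$. $N_\varepsilon(Z,d)$ is the maximal cardinality of a subset of $Z$ with pairwise $d$-distances $\ge\varepsilon$. $h_\Sigma(X,M,\rho)=\sup_{\varepsilon>0}\inf_F\inf_{\delta>0}\limsup_i\frac{1}{|D_i|}\log N_\varepsilon(\operatorname{Map}(X,M,\rho,F,\delta,\sigma_i),\rho_\infty^{D_i})$, infimum over finite $F\subset M$, $\log 0=-\infty$. *)

(* Defs.v *)
From HB Require Import structures.
From mathcomp Require Import all_boot all_order all_algebra.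
From mathcomp Require Import monoid.
From mathcomp Require Import all_classical all_reals all_analysis.
Set Implicit Arguments. Unset Strict Implicit. Unset Printing Implicit Defensive.
Import Order.TTheory GRing.Theory Num.Theory numFieldNormedType.Exports.
Local Open Scope classical_set_scope.
Local Open Scope ring_scope.

Section Defs.
Variable R : realType.

Definition continuous_monoid_action (M : monoidType) (X : topologicalType)
  (act : M -> X -> X) : Prop :=
  [/\ forall m : M, continuous (act m),
      forall x, act 1%g x = x &
      forall (m1 m2 : M) x, act (m1 * m2)%g x = act m1 (act m2 x)].

Definition is_pseudometric (X : Type) (rho : X -> X -> R) : Prop :=
  [/\ forall x, rho x x = 0,
      forall x y, rho x y = rho y x &
      forall x y z, rho x z <= rho x y + rho y z].

Definition continuous_pseudometric (X : topologicalType) (rho : X -> X -> R) : Prop :=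
  is_pseudometric rho /\ continuous (fun p : X * X => rho p.1 p.2).

Definition dynamically_generating (M : monoidType) (X : Type)
  (act : M -> X -> X) (rho : X -> X -> R) : Prop :=
  forall x y : X, x <> y -> exists m : M, 0 < rho (act m x) (act m y).

Definition d_ham (D : finType) (f g : D -> D) : R :=
  (#|[pred v | f v != g v]|%:R) / (#|D|%:R).

Definition directed_set (I : Type) (le : I -> I -> Prop) : Prop :=
  [/\ exists i : I, True,
      forall i, le i i,
      forall i j k, le i j -> le j k -> le i k &
      forall i j, exists k, le i k /\ le j k].

Definition net_lim (I : Type) (le : I -> I -> Prop) (a : I -> R) (l : R) : Prop :=
  forall e : R, 0 < e -> exists i0, forall i, le i0 i -> `|a i - l| < e.

Definition net_limsup (I : Type) (le : I -> I -> Prop) (a : I -> \bar R) : \bar R :=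
  ereal_inf [set ereal_sup [set a i | i in [set i | le i0 i]] | i0 in [set: I]].

Definition strong_sofic_approx (M : monoidType) (I : Type) (le : I -> I -> Prop)
  (D : I -> finType) (sigma : forall i, M -> D i -> D i) : Prop :=
  [/\ directed_set le,
      (forall i, (0 < #|D i|)%N) /\ (forall i, sigma i 1%g = id),
      forall m1 m2 : M,
        net_lim le (fun i => d_ham (sigma i (m1 * m2)%g) (sigma i m1 \o sigma i m2)) 0,
      forall m1 m2 : M, m1 <> m2 ->
        net_lim le (fun i => d_ham (sigma i m1) (sigma i m2)) 1 &
      forall K : set M, finite_set K -> exists Delta : nat, (1 <= Delta)%N /\
        forall i (k : M) (v : D i), K k ->
          (#|[pred w | sigma i k w == v]| <= Delta)%N].

Definition strongly_sofic (M : monoidType) : Prop :=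
  exists (I : Type) (le : I -> I -> Prop) (D : I -> finType)
    (sigma : forall i, M -> D i -> D i), strong_sofic_approx le sigma.

Definition rho2 (X : Type) (rho : X -> X -> R) (D : finType) (phi psi : D -> X) : R :=
  Num.sqrt ((#|D|%:R)^-1 * \sum_(v : D) (rho (phi v) (psi v)) ^+ 2).

Definition rhoinf (X : Type) (rho : X -> X -> R) (D : finType) (phi psi : D -> X) : R :=
  \big[Num.max/0]_(v : D) rho (phi v) (psi v).

Definition MapSet (M : monoidType) (X : Type) (act : M -> X -> X)
  (rho : X -> X -> R) (F : set M) (delta : R) (D : finType)
  (s : M -> D -> D) : set (D -> X) :=
  [set phi : D -> X | forall m, F m -> rho2 rho (fun v => phi (s m v)) (fun v => act m (phi v)) <= delta].

Definition sep_number (T : Type) (d : T -> T -> R) (eps : R) (Z : set T) : \bar R :=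
  ereal_sup [set (n%:R)%:E | n in [set n : nat | exists f : 'I_n -> T,
     [/\ injective f, forall j, Z (f j) &
         forall j k, j != k -> eps <= d (f j) (f k)]]].

Definition elog (x : \bar R) : \bar R :=
  match x with
  | EFin r => if (0 < r)%R then (ln r)%:E else -oo
  | +oo => +oo
  | -oo => -oo
  end%E.

Definition sofic_entropy (M : monoidType) (X : Type) (act : M -> X -> X)
  (I : Type) (le : I -> I -> Prop) (D : I -> finType)
  (sigma : forall i, M -> D i -> D i) (rho : X -> X -> R) : \bar R :=
  ereal_sup [set
    ereal_inf [set
      ereal_inf [set
        net_limsup le (fun i =>
          ((#|D i|%:R)^-1)%:E *
            elog (sep_number (@rhoinf X rho (D i)) eps
                    (MapSet act rho F delta (sigma i))))%E
      | delta in [set delta : R | 0 < delta]]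
    | F in [set F : set M | finite_set F]]
  | eps in [set eps : R | 0 < eps]].

End Defs.

(* Main.v *)
Require Import Defs.
From HB Require Import structures.
From mathcomp Require Import all_boot all_order all_algebra.
From mathcomp Require Import monoid.
From mathcomp Require Import all_classical all_reals all_analysis.
From mathcomp Require Import finmap.
From mathcomp Require Import ring lra.
Set Implicit Arguments. Unset Strict Implicit. Unset Printing Implicit Defensive.
Import Order.TTheory GRing.Theory Num.Theory numFieldNormedType.Exports.
Local Open Scope classical_set_scope.
Local Open Scope ring_scope.


Definition pX (X : topologicalType) (x0 : X) : Type := X.
HB.instance Definition _ (X : topologicalType) (x0 : X) := Topological.on (pX x0).
HB.instance Definition _ (X : topologicalType) (x0 : X) := isPointed.Build (pX x0) x0.

Lemma compact_cover_np (X : topologicalType) (A : set X) : compact A -> cover_compact A.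
Proof.
move=> cA I D f fop fcov.
case: (pselect (exists x : X, True)) => [[x0 _]|nX].
  have := @compact_cover (pX x0). move=> /(congr1 (fun P => P A)) e.
  have : cover_compact (A : set (pX x0)) by rewrite -e.
  by move=> /(_ I D f fop fcov).
exists fset0 => // x Ax; exfalso; apply: nX; by exists x.
Qed.

Lemma cont_pair2 (X Y : topologicalType) (f g : X -> Y) : continuous f -> continuous g ->
  continuous (fun p : X * X => (f p.1, g p.2)).
Proof.
move=> cf cg x; apply: cvg_pair.
  by apply: continuous_comp; [exact: cvg_fst|exact: cf].
by apply: continuous_comp; [exact: cvg_snd|exact: cg].
Qed.

Lemma sum_seq_ge (R : realType) (T : eqType) (s : seq T) (F : T -> R) x :
  (forall y, 0 <= F y) -> x \in s -> F x <= \sum_(y <- s) F y.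
Proof.
move=> Fge; elim: s => // a s IH; rewrite in_cons big_cons => /orP [/eqP ->|xs].
  by rewrite lerDl sumr_ge0.
by rewrite ler_wpDl // IH.
Qed.

Section Topo.
Variables (R : realType) (X : topologicalType).
Hypothesis cX : compact [set: X].

Lemma pm_ge0 (d : X -> X -> R) : is_pseudometric d -> forall x y, 0 <= d x y.
Proof.
case=> d0 ds dt x y; have := dt x y x; rewrite d0 (ds y x) => h.
by rewrite -(@pmulr_rge0 _ 2) // mulr2n mulrDl mul1r.
Qed.

Lemma cont_sec (d : X -> X -> R) : continuous_pseudometric d -> forall c, continuous (d c).
Proof.
case=> _ cd c x.
apply: (@continuous_comp _ _ _ (fun y => (c, y)) (fun p : X * X => d p.1 p.2)).
  by apply: cvg_pair; [exact: cvg_cst|exact: cvg_id].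
exact: cd.
Qed.

Lemma fin_cover (d : X -> X -> R) : continuous_pseudometric d ->
  forall r, 0 < r -> exists cs : seq X, forall x, has (fun c => d c x < r) cs.
Proof.
move=> cd r r0.
have := @compact_cover_np X _ cX X setT (fun c => [set x | d c x < r]).
case.
- move=> c _; apply: (@open_comp _ _ (d c) [set z : R | z < r]); last exact: open_lt.
  by move=> x _; apply: cont_sec.
- move=> x _; exists x => //=; by case: cd => -[-> _ _] _.
move=> D' _ hc; exists D' => x; have [c /= cD hx] := hc x I.
by apply/hasP; exists c.
Qed.

Lemma pm_bound (d : X -> X -> R) : continuous_pseudometric d ->
  exists B, 0 < B /\ forall x y, d x y <= B.
Proof.
move=> cd; have [cs hc] := fin_cover cd ltr01.
have pm := cd.1; have ge0 := pm_ge0 pm.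
exists (3 + \sum_(c <- cs) \sum_(c' <- cs) d c c'); split.
  by apply: ltr_wpDr; [apply: sumr_ge0 => c _; apply: sumr_ge0|].
move=> x y.
have /hasP [c cin hx] := hc x; have /hasP [c' cin' hy] := hc y.
have h1 : d c c' <= \sum_(c <- cs) \sum_(c' <- cs) d c c'.
  have hh := @sum_seq_ge R X cs (fun z => \sum_(w <- cs) d z w) c (fun z => sumr_ge0 _ (fun w _ => ge0 z w)) cin.
  apply: le_trans hh; exact: sum_seq_ge.
case: pm => _ ds dt.
have := dt x c y; have := dt c c' y; rewrite (ds x c).
move: hx hy h1; set S := \sum_(_ <- _) _ => hx hy h1 t1 t2.
lra.
Qed.

Lemma unif_gen (M : monoidType) (act : M -> X -> X) (d e : X -> X -> R) :
  (forall m, continuous (act m)) -> continuous_pseudometric d ->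
  continuous_pseudometric e -> dynamically_generating act d ->
  forall kappa, 0 < kappa -> exists ks : seq M, exists eta : R, 0 < eta /\
    forall x y, (forall k, k \in ks -> d (act k x) (act k y) < eta) -> e x y < kappa.
Proof.
move=> cact cd ce gd kappa k0.
pose Z := (fun p : X * X => e p.1 p.2) @^-1` [set z : R | kappa <= z].
have clZ : closed Z.
  apply: preimage_closed; last exact: closed_ge.
  by move=> p _; exact: ce.2.
have cZ : compact Z.
  apply: (subclosed_compact clZ (compact_setX cX cX)) => p _; by split.
pose f := fun i : M * nat => [set p : X * X | i.2.+1%:R^-1 < d (act i.1 p.1) (act i.1 p.2)].
have := @compact_cover_np _ Z cZ _ setT f.
case.
- move=> i _.
  apply: (@open_comp _ _ (fun p : X * X => d (act i.1 p.1) (act i.1 p.2)) [set z : R | i.2.+1%:R^-1 < z]); last exact: open_gt.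
  move=> p _.
  apply: (@continuous_comp _ _ _ (fun p : X * X => (act i.1 p.1, act i.1 p.2)) (fun q : X * X => d q.1 q.2)).
    exact: (@cont_pair2 X X (act i.1) (act i.1)).
  exact: cd.2.
- move=> [x y] /= Zp.
  have xy : x <> y.
    move=> exy; move: Zp; rewrite /Z /= exy; case: ce => -[-> _ _] _.
    by move=> /(lt_le_trans k0); rewrite ltxx.
  have [m hm] := gd x y xy.
  pose N := Num.truncn ((d (act m x) (act m y))^-1).
  exists (m, N) => //; rewrite /f /=.

  rewrite invf_plt ?posrE //; first exact: Num.Theory.truncnS_gt.
move=> D' _ hc.
exists [seq i.1 | i <- D'], ((\max_(i <- D') i.2).+1%:R^-1); split; first by [].
move=> x y H; rewrite ltNge; apply/negP => Zxy.
have [i iD /= hi] := hc (x, y) Zxy.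
have hk := H i.1 (map_f _ iD).
have := lt_trans hi hk.
rewrite ltf_pV2 ?posrE // ltr_nat ltnS => /negP; apply.
by apply/negP; rewrite -leqNgt; apply: (@leq_bigmax_seq _ _ xpredT (fun j => j.2) i).

Qed.

End Topo.


Section Comb.
Variables (R : realType) (D : finType).

Definition ind (b : bool) : R := if b then 1 else 0.

Lemma ind_ge0 b : 0 <= ind b. Proof. by case: b; rewrite /ind. Qed.
Lemma ind_le1 b : ind b <= 1. Proof. by case: b; rewrite /ind. Qed.

Lemma cnt_card (P : pred D) : \sum_v ind (P v) = #|P|%:R.
Proof.
rewrite -sum1_card natr_sum [RHS]big_mkcond /=; apply: eq_bigr => v _.
by rewrite /ind; have -> : (v \in P) = P v by [].
Qed.

Lemma markov_cnt (a : D -> R) (c dl : R) : 0 < c -> (forall v, 0 <= a v) -> 0 < dl ->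
  Num.sqrt (#|D|%:R^-1 * \sum_v a v ^+ 2) <= dl ->
  \sum_v ind (c <= a v) <= #|D|%:R * dl ^+ 2 / c ^+ 2.
Proof.
move=> c0 a0 d0 hs.
have S0 : 0 <= \sum_v a v ^+ 2 by apply: sumr_ge0 => v _; apply: sqr_ge0.
have hS : \sum_v a v ^+ 2 <= #|D|%:R * dl ^+ 2.
  case: (posnP #|D|) => [D0|Dp].
    rewrite D0 mul0r; apply: le_trans (_ : \sum_(v : D) (0:R) <= 0).
      apply: ler_sum => v _. 
      by have := card0_eq D0 v; rewrite !inE.
    by rewrite big1.
  have n0 : 0 < #|D|%:R :> R by rewrite ltr0n.
  have h1 : #|D|%:R^-1 * \sum_v a v ^+ 2 <= dl ^+ 2.
    have ni : 0 <= #|D|%:R^-1 :> R by rewrite invr_ge0 ler0n.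
    rewrite -(sqr_sqrtr (mulr_ge0 ni S0)).
    by rewrite lerXn2r // ?nnegrE ?sqrtr_ge0 // ltW.
  by rewrite -ler_pdivrMl // mulrC.
have hp : (\sum_v ind (c <= a v)) * c ^+ 2 <= \sum_v a v ^+ 2.
  rewrite mulr_suml; apply: ler_sum => v _; rewrite /ind.
  case: ifP => h; last by rewrite mul0r sqr_ge0.
  by rewrite mul1r lerXn2r // ?nnegrE // ltW.
rewrite ler_pdivlMr ?exprn_gt0 //; exact: le_trans hp hS.
Qed.

Lemma cnt_preim (s : D -> D) (P : pred D) (Dl : nat) :
  (forall w, (#|[pred v | s v == w]| <= Dl)%N) ->
  \sum_v ind (P (s v)) <= Dl%:R * \sum_w ind (P w).
Proof.
move=> hD.
have -> : \sum_v ind (P (s v)) = \sum_w ind (P w) * \sum_v ind (s v == w).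
  have e1 : forall v, ind (P (s v)) = \sum_w ind (P w) * ind (s v == w).
    move=> v; rewrite (bigD1 (s v)) //= big1 ?addr0; first by rewrite /ind eqxx mulr1.
    by move=> w /negbTE hw; rewrite /ind eq_sym hw mulr0.
  under eq_bigr do rewrite e1.
  rewrite exchange_big; apply: eq_bigr => w _; by rewrite mulr_sumr.
rewrite mulr_sumr; apply: ler_sum => w _.
rewrite mulrC ler_wpM2r ?ind_ge0 //.
by rewrite (cnt_card [pred v | s v == w]) ler_nat hD.
Qed.

Lemma cnt_union (T : Type) (ks : seq T) (P : T -> pred D) :
  \sum_v ind (has (fun k => P k v) ks) <= \sum_(k <- ks) \sum_v ind (P k v).
Proof.
rewrite (exchange_big_dep xpredT) //=; apply: ler_sum => v _.
elim: ks => [|k ks IH]; first by rewrite big_nil /ind.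
rewrite big_cons /=; apply: le_trans (lerD (lexx _) IH).
by rewrite /ind; case: (P k v); case: (has _ _) => //=; lra.
Qed.

Lemma prod_supp (N : nat) (t : R) (f : {ffun D -> 'I_N.+1}) :
  \prod_v (if f v == ord0 then 1 else t) = t ^+ #|[pred v | f v != ord0]|.
Proof.
rewrite -prodr_const [RHS]big_mkcond /=; apply: eq_bigr => v _.
by rewrite [in RHS]unfold_in /=; case: (f v == ord0).
Qed.

Lemma sum_classes (N : nat) (t : R) :
  \sum_(f : {ffun D -> 'I_N.+1}) \prod_v (if f v == ord0 then 1 else t)
  = (1 + N%:R * t) ^+ #|D|.
Proof.
rewrite -(bigA_distr_bigA (fun (v : D) (j : 'I_N.+1) => if j == ord0 then 1 else t)) /=.
rewrite -prodr_const; apply: eq_bigr => v _.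
rewrite big_ord_recl eqxx (eq_bigr (fun _ => t)); last first.
  by [].
by rewrite big_const_ord iter_addr addr0 mulr_natl.
Qed.

End Comb.


Lemma lin3 (R : realType) (e A B B' C P Q : R) : e <= A -> A <= B' + C -> B' = B ->
  C <= P + Q -> B < e / 3 -> Q < e / 3 -> e / 3 <= P.
Proof. move=> *; lra. Qed.

Section Step2.
Variables (R : realType) (M : monoidType) (X : topologicalType) (act : M -> X -> X).
Variables (D : finType) (s : M -> D -> D) (d d' : X -> X -> R).
Hypothesis pd : is_pseudometric d.
Hypothesis pd' : is_pseudometric d'.
Variables (ks : seq M) (eta eps : R).
Hypothesis eta0 : 0 < eta.
Hypothesis eps0 : 0 < eps.
Hypothesis Hgen : forall x y, (forall k, k \in ks -> d' (act k x) (act k y) < eta) -> d x y < eps.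
Variables (N : nat) (cell : X -> 'I_N.+1).
Hypothesis hcell : forall x y, cell x = cell y -> d x y < eps.
Hypothesis hcell0 : forall x, cell x != ord0.
Variables (t dl : R).
Hypothesis t0 : 0 < t.
Hypothesis t1 : t <= 1.
Hypothesis dl0 : 0 < dl.

Definition bad (phi : D -> X) (v : D) :=
  has (fun k => eta / 3 <= d' (phi (s k v)) (act k (phi v))) ks.
Definition cls (phi : D -> X) : {ffun D -> 'I_N.+1} :=
  [ffun v => if bad phi v then cell (phi v) else ord0].
Definition bnd : R := \sum_(k <- ks) (#|D|%:R * dl ^+ 2 / (eta / 3) ^+ 2).
Definition Cst : R := (1 + N%:R * t) ^+ #|D| * expR (- (bnd * ln t)).

Lemma bad_cnt phi : MapSet act d' [set k | k \in ks] dl s phi ->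
  \sum_v ind R (bad phi v) <= bnd.
Proof.
move=> hphi; apply: le_trans (cnt_union _ _ _) _.
rewrite /bnd big_seq [X in _ <= X]big_seq; apply: ler_sum => k kin.
apply: (markov_cnt (a := fun v => d' (phi (s k v)) (act k (phi v)))) => //.
- by apply: divr_gt0.
- move=> v; exact: pm_ge0.
- exact: hphi.
Qed.

Lemma supp_cls phi :
  #|[pred v | cls phi v != ord0]|%:R = \sum_v ind R (bad phi v).
Proof.
rewrite -cnt_card; apply: eq_bigr => v _; rewrite /= ffunE.
by case: (bad phi v); rewrite ?eqxx ?hcell0.
Qed.

Lemma weight_ge1 phi : MapSet act d' [set k | k \in ks] dl s phi ->
  1 <= t ^+ #|[pred v | cls phi v != ord0]| * expR (- (bnd * ln t)).
Proof.
move=> hphi; set k := #|_|.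
have hk : k%:R <= bnd by rewrite /k supp_cls; exact: bad_cnt.
have -> : t ^+ k = expR (k%:R * ln t) by rewrite expRM_natl lnK.
rewrite -expRD -[X in X <= _]expR0 ler_expR.
have : ln t <= 0 by exact: ln_le0.
nra.
Qed.

Lemma rhoinf_ex (rho : X -> X -> R) (phi psi : D -> X) c : 0 < c ->
  c <= rhoinf rho phi psi -> exists v, c <= rho (phi v) (psi v).
Proof.
move=> c0 h; apply: contrapT => nv.
have : rhoinf rho phi psi < c.
  rewrite /rhoinf; apply: bigmax_lt => // v _; rewrite ltNge; apply/negP => hv.
  by apply: nv; exists v.
by rewrite ltNge h.
Qed.

Lemma rhoinf_ge (rho : X -> X -> R) (phi psi : D -> X) v :
  rho (phi v) (psi v) <= rhoinf rho phi psi.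
Proof. exact: (le_bigmax _ (fun v => rho (phi v) (psi v))). Qed.

Lemma cls_sep phi psi : cls phi = cls psi -> eps <= rhoinf d phi psi ->
  eta / 3 <= rhoinf d' phi psi.
Proof.
move=> hc he; have [v hv] := rhoinf_ex eps0 he.
have e := congr1 (fun f : {ffun D -> 'I_N.+1} => f v) hc; rewrite /= !ffunE in e.
case: (boolP (bad phi v)) => bp; case: (boolP (bad psi v)) => bq;
  rewrite ?(negbTE bp) ?(negbTE bq) ?bp ?bq /= in e.
- by have := hcell e; rewrite ltNge hv.
- by move: (hcell0 (phi v)); rewrite e eqxx.
- by move: (hcell0 (psi v)); rewrite -e eqxx.
have : ~ (forall k, k \in ks -> d' (act k (phi v)) (act k (psi v)) < eta).
  by move=> /Hgen; rewrite ltNge hv.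
move=> /existsNP [k /not_implyP [kin /negP]]; rewrite -leNgt => hk.
move/hasPn: bp => /(_ k kin); rewrite /= -ltNge => h1.
move/hasPn: bq => /(_ k kin); rewrite /= -ltNge => h2.
apply: le_trans (rhoinf_ge d' phi psi (s k v)).
case: pd' => _ ds dt.
have t1' := dt (act k (phi v)) (phi (s k v)) (act k (psi v)).
have t2' := dt (phi (s k v)) (psi (s k v)) (act k (psi v)).
have e1 := ds (act k (phi v)) (phi (s k v)).
exact: (lin3 hk t1' e1 t2' h1 h2).
Qed.

Lemma sep_ge0 (rho : X -> X -> R) c (S : set (D -> X)) :
  (0 <= sep_number (@rhoinf R X rho D) c S)%E.
Proof.
apply: ereal_sup_ubound; exists 0%N => //=.
exists (fun i : 'I_0 => match i with Ordinal _ h => False_rect _ (notF h) end).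
by split; case.
Qed.

Lemma sep_compare (S : set (D -> X)) :
  S `<=` MapSet act d' [set k | k \in ks] dl s ->
  (sep_number (@rhoinf R X d D) eps S <= Cst%:E * sep_number (@rhoinf R X d' D) (eta / 3) S)%E.
Proof.
move=> SM; apply: ge_ereal_sup => _ [k [e [einj eS esep]] <-].
have Cpos : 0 < Cst.
  rewrite /Cst; apply: mulr_gt0; last exact: expR_gt0.
  apply: exprn_gt0; apply: ltr_pwDl => //; apply: mulr_ge0 => //; exact: ltW.
have := sep_ge0 d' (eta / 3) S.
case E: (sep_number _ _ _) => [r| |] //= r0; last first.
  by rewrite gt0_muley ?lte_fin // leey.
rewrite lee_fin; rewrite lee_fin in r0.
pose A f := [pred j : 'I_k | cls (e j) == f].
have hfib : forall f, #|A f|%:R <= r * (t ^+ #|[pred v | f v != ord0]| * expR (- (bnd * ln t))).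
  move=> f; case: (pickP (A f)) => [j0 hj0|none]; last first.
    rewrite eq_card0 //; apply: mulr_ge0 => //; apply: mulr_ge0.
      by apply: exprn_ge0; exact: ltW.
    exact: expR_ge0.
  have hf : cls (e j0) = f by apply/eqP.
  have w1 := weight_ge1 (SM _ (eS j0)); rewrite hf in w1.
  have hA : #|A f|%:R <= r.
    rewrite -lee_fin -E; apply: ereal_sup_ubound; exists #|A f| => //.
    exists (fun i => e (enum_val i)); split.
    - by move=> i i' /einj /enum_val_inj.
    - by move=> i; exact: eS.
    - move=> i i' ii'; apply: cls_sep.
        have := enum_valP i; have := enum_valP i'; rewrite !unfold_in /= => /eqP -> /eqP ->.
        by [].
      apply: esep; apply: contra ii' => /eqP /enum_val_inj ->; exact: eqxx.
  by apply: le_trans hA _; rewrite ler_peMr.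
have -> : k%:R = \sum_(j : 'I_k) (1 : R) by rewrite sumr_const card_ord.
rewrite (partition_big (fun j => cls (e j)) xpredT) //=.
have -> : \sum_(f : {ffun D -> 'I_N.+1}) \sum_(j | cls (e j) == f) (1 : R) =
          \sum_(f : {ffun D -> 'I_N.+1}) #|A f|%:R.
  apply: eq_bigr => f _; rewrite -cnt_card big_mkcond /=; apply: eq_bigr => j _.
  by rewrite /ind; case: (_ == _).
apply: le_trans (ler_sum _ (fun f _ => hfib f)) _.
rewrite -mulr_sumr -mulr_suml.
under eq_bigr do rewrite -prod_supp.
by rewrite sum_classes /Cst mulrC.
Qed.

End Step2.


Section Step1.
Variables (R : realType) (M : monoidType) (X : topologicalType) (act : M -> X -> X).
Hypothesis actM : forall (m1 m2 : M) x, act (m1 * m2)%g x = act m1 (act m2 x).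
Variables (D : finType) (s : M -> D -> D) (d d' : X -> X -> R).
Hypothesis pd : is_pseudometric d.
Hypothesis pd' : is_pseudometric d'.
Variables (ks : seq M) (eta kappa B : R).
Hypothesis eta0 : 0 < eta.
Hypothesis kappa0 : 0 < kappa.
Hypothesis HA : forall x y, (forall k, k \in ks -> d (act k x) (act k y) < eta) -> d' x y < kappa.
Hypothesis hB : forall x y, d' x y <= B.
Variables (m : M) (Dl : nat).
Hypothesis hDl : forall w, (#|[pred v | s m v == w]| <= Dl)%N.
Variables (F : set M) (dl : R).
Hypothesis dl0 : 0 < dl.
Hypothesis Fk : forall k, k \in ks -> F k.
Hypothesis Fkm : forall k, k \in ks -> F (k * m)%g.

Lemma step1_core (phi : D -> X) : MapSet act d F dl s phi ->
  \sum_v d' (phi (s m v)) (act m (phi v)) ^+ 2 <=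
  #|D|%:R * kappa ^+ 2 + B ^+ 2 * \sum_(k <- ks)
    ((Dl%:R + 1) * (#|D|%:R * dl ^+ 2 / (eta / 3) ^+ 2)
     + #|[pred v | s (k * m)%g v != (s k \o s m) v]|%:R).
Proof.
move=> hphi.
pose Pa k w := eta / 3 <= d (phi (s k w)) (act k (phi w)).
pose Pb k v := s (k * m)%g v != (s k \o s m) v.
pose Pc k v := eta / 3 <= d (phi (s (k * m)%g v)) (act (k * m)%g (phi v)).
pose bad v := has (fun k => [|| Pa k (s m v), Pb k v | Pc k v]) ks.
have ge0 := pm_ge0 pd; have ge0' := pm_ge0 pd'.
have pw : forall v, d' (phi (s m v)) (act m (phi v)) ^+ 2 <= kappa ^+ 2 + ind R (bad v) * B ^+ 2.
  move=> v; rewrite /ind; case: ifP => hb.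
    rewrite mul1r; apply: ler_wpDl; first exact: sqr_ge0.
    have B0 : 0 <= B := le_trans (ge0' (phi v) (phi v)) (hB _ _).
    by rewrite lerXn2r ?nnegrE ?ge0' ?B0.
  rewrite mul0r addr0 lerXn2r ?nnegrE ?ge0' ?(ltW kappa0) //.
  apply: ltW; apply: HA => k kin.
  move/negbT/hasPn: hb => /(_ k kin) /=; rewrite !negb_or => /and3P [ha hb hc].
  move: ha hb hc; rewrite /Pa /Pb /Pc -!ltNge negbK /= => ha /eqP hb hc.
  rewrite -actM.
  case: pd => _ ds dt.
  have t1 := dt (act k (phi (s m v))) (phi (s k (s m v))) (act (k * m)%g (phi v)).
  have e1 := ds (act k (phi (s m v))) (phi (s k (s m v))).
  rewrite hb in hc.
  apply: le_lt_trans t1 _; rewrite e1; have h := ltrD ha hc; apply: lt_le_trans h _. move: eta0; generalize eta => e he. lra.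
apply: le_trans (ler_sum _ (fun v _ => pw v)) _.
rewrite big_split /= sumr_const; apply: lerD; first by rewrite mulr_natl.
rewrite -mulr_suml mulrC; apply: ler_wpM2l; first exact: sqr_ge0.
apply: le_trans (cnt_union _ _ _) _.
rewrite big_seq [X in _ <= X]big_seq; apply: ler_sum => k kin.
have Q0 : 0 < eta / 3 by apply: divr_gt0.
have hpw : forall v, ind R [|| Pa k (s m v), Pb k v | Pc k v] <=
    ind R (Pa k (s m v)) + ind R (Pb k v) + ind R (Pc k v).
  by move=> v; rewrite /ind; case: (Pa _ _); case: (Pb _ _); case: (Pc _ _) => /=;
     rewrite ?addr0 ?add0r ?lerDl ?ler0n // ?ler_wpDl ?ler0n ?lerDl // ler01.
apply: le_trans (ler_sum _ (fun v _ => hpw v)) _.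
rewrite !big_split /=.
have ha : \sum_v ind R (Pa k (s m v)) <= Dl%:R * (#|D|%:R * dl ^+ 2 / (eta / 3) ^+ 2).
  apply: le_trans (cnt_preim _ _ hDl) _.
  apply: ler_wpM2l => //.
  apply: (markov_cnt (a := fun w => d (phi (s k w)) (act k (phi w)))) => //.
  exact: hphi _ (Fk kin).
have hc : \sum_v ind R (Pc k v) <= #|D|%:R * dl ^+ 2 / (eta / 3) ^+ 2.
  apply: (markov_cnt (a := fun w => d (phi (s (k * m)%g w)) (act (k * m)%g (phi w)))) => //.
  exact: hphi _ (Fkm kin).
have hb : \sum_v ind R (Pb k v) = #|[pred v | s (k * m)%g v != (s k \o s m) v]|%:R.
  by rewrite -cnt_card.
rewrite hb mulrDl mul1r.
rewrite -addrA [X in _ <= X]addrAC -[X in _ <= X]addrA.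
apply: (lerD ha); exact: lerD.
Qed.

End Step1.


Section Net.
Variables (R : realType) (I : Type) (le : I -> I -> Prop).
Hypothesis dir : directed_set le.

Definition ev (P : I -> Prop) := exists i0, forall i, le i0 i -> P i.

Lemma ev_and P Q : ev P -> ev Q -> ev (fun i => P i /\ Q i).
Proof.
case: dir => _ _ tr up [i1 h1] [i2 h2]; have [k [k1 k2]] := up i1 i2.
by exists k => i ki; split; [apply: h1; exact: tr ki|apply: h2; exact: tr ki].
Qed.

Lemma ev_T : ev (fun _ => True).
Proof. by case: dir => -[i _] _ _ _; exists i. Qed.

Lemma ev_imp P Q : (forall i, P i -> Q i) -> ev P -> ev Q.
Proof. by move=> h [i0 h0]; exists i0 => i /h0 /h. Qed.

Lemma ev_seq (T : eqType) (s : seq T) (P : T -> I -> Prop) :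
  (forall x, x \in s -> ev (P x)) -> ev (fun i => forall x, x \in s -> P x i).
Proof.
elim: s => [|a s IH] h; first by apply: ev_imp ev_T => i _ x.
have := ev_and (h a (mem_head _ _)) (IH (fun x xs => h x (mem_behead (s:=a :: s) xs))).
apply: ev_imp => i [ha hs] x; rewrite in_cons => /orP [/eqP ->|]//; exact: hs.
Qed.

Local Open Scope ereal_scope.

Lemma limsup_le (a b : I -> \bar R) (th : R) :
  ev (fun i => a i <= th%:E + b i) -> net_limsup le a <= th%:E + net_limsup le b.
Proof.
case: (dir) => _ _ tr up [i1 h1].
rewrite addeC -leeBlDr //; apply: le_ereal_inf_tmp => _ [i0 _ <-].
have [i2 [i21 i20]] := up i1 i0.
rewrite leeBlDr //.
apply: le_trans (_ : ereal_sup [set a i | i in [set i | le i2 i]] <= _).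
  by apply: ereal_inf_lbound; exists i2.
apply: ge_ereal_sup => _ [i hi <-].
apply: le_trans (h1 _ (tr _ _ _ i21 hi)) _.
rewrite addeC leeD2r //; apply: ereal_sup_ubound; exists i => //; exact: tr hi.
Qed.

End Net.

Section Elog.
Variable R : realType.
Local Open Scope ereal_scope.

Lemma elog_le (x y : \bar R) (C : R) : (0 < C)%R -> x <= C%:E * y ->
  elog x <= (ln C)%:E + elog y.
Proof.
move=> C0; case: y => [r| |] /=.
- case: x => [u| |] //=.
  + rewrite -EFinM lee_fin => hu.
    case: ifP => u0; last by rewrite leNye.
    have r0 : (0 < r)%R.
      by rewrite -(pmulr_rgt0 _ C0); exact: lt_le_trans u0 hu.
    rewrite r0 -EFinD lee_fin -lnM ?posrE //.
    by rewrite ler_ln ?posrE // mulr_gt0.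
  + by move=> _; rewrite leNye.
- by rewrite leey.
- by rewrite gt0_muleNy ?lte_fin // leeNy_eq => /eqP ->.
Qed.

Lemma scale_le (e f : \bar R) (c a : R) : (0 < a)%R -> e <= c%:E + f ->
  a%:E * e <= (a * c)%:E + a%:E * f.
Proof.
move=> a0; case: f => [r| |] /=.
- case: e => [u| |] //=.
  + rewrite -!EFinM -EFinD !lee_fin => h.
    by rewrite -mulrDr ler_wpM2l // ltW.
  + by move=> _; rewrite gt0_muleNy ?lte_fin // leNye.
- by move=> _; rewrite gt0_muley ?lte_fin // addey // leey.
- rewrite addeNy leeNy_eq => /eqP ->.
  by rewrite gt0_muleNy ?lte_fin // leNye.
Qed.

End Elog.


Lemma small_choice (R : realType) (c A : R) : 0 < c -> 0 <= A ->
  exists x, [/\ 0 < x, x <= 1 & A * x <= c].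
Proof.
move=> c0 A0; have A1 : 0 < A + 1 by lra.
exists (Num.min 1 (c / (A + 1))); split.
- by rewrite lt_min ltr01 divr_gt0.
- by rewrite ge_min lexx.
- apply: le_trans (_ : A * (c / (A + 1)) <= c).
    by apply: ler_wpM2l => //; rewrite ge_min lexx orbT.
  rewrite mulrA ler_pdivrMr // mulrC ler_pM2l //; lra.
Qed.

Lemma sum_const_seq (R : realType) (T : Type) (s : seq T) (c : R) :
  \sum_(k <- s) c = (size s)%:R * c.
Proof.
elim: s => [|k s IH]; first by rewrite big_nil mul0r.
by rewrite big_cons IH /= -add1n natrD mulrDl mul1r.
Qed.


Lemma arith1 (R : realType) (n S T B L tau dl' : R) : 0 < n -> 0 <= L -> 0 <= T -> 0 <= tau ->
  tau * (4 * B^+2 * (L+1)) = dl'^+2 -> S <= n * (dl'/2)^+2 + B^+2 * T -> T <= L * (2 * n * tau) ->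
  S <= n * dl'^+2.
Proof.
move=> n0 L0 T0 t0 ht hS hT.
have B2 : 0 <= B ^+ 2 by exact: sqr_ge0.
have h1 : B^+2 * T <= B^+2 * (L * (2 * n * tau)) by exact: ler_wpM2l.
have h2 : B^+2 * (L * (2 * n * tau)) <= n * dl'^+2 / 2.
  rewrite -ht. have : 0 <= B^+2 * (2 * n * tau) by apply: mulr_ge0 => //; apply: mulr_ge0 => //; apply: mulr_ge0 => //; lra.
  nra.
have : 0 <= n * dl' ^+ 2 by apply: mulr_ge0; [lra|exact: sqr_ge0].
move: h1 h2 hS; rewrite expr2 [(dl'/2)^+2]expr2. lra.
Qed.

Lemma arith2 (R : realType) (n A dl tau c : R) : 0 < n -> 0 <= A -> 0 < dl -> dl <= 1 ->
  A * dl <= tau -> c <= n * tau -> n * (A * dl ^+ 2) + c <= 2 * n * tau.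
Proof.
move=> n0 A0 d0 d1 hA hc.
have : A * dl ^+ 2 <= A * dl.
  rewrite expr2 mulrA; apply: ler_piMr => //; exact: mulr_ge0 (ltW d0).
move=> h; have : n * (A * dl ^+ 2) <= n * tau.
  apply: ler_wpM2l; [lra|exact: le_trans h hA].
lra.
Qed.

Section Main.
Variables (R : realType) (M : monoidType) (X : topologicalType) (act : M -> X -> X).
Hypothesis cX : compact [set: X].
Hypothesis cact : forall m, continuous (act m).
Hypothesis actM : forall (m1 m2 : M) x, act (m1 * m2)%g x = act m1 (act m2 x).
Unset Implicit Arguments.
Variables (I : Type) (le : I -> I -> Prop) (D : I -> finType) (sigma : forall i, M -> D i -> D i).
Set Implicit Arguments.
Hypothesis hs : strong_sofic_approx R le sigma.

Lemma step1 (d d' : X -> X -> R) : continuous_pseudometric d -> dynamically_generating act d ->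
  continuous_pseudometric d' ->
  forall (F' : set M) (dl' : R), finite_set F' -> 0 < dl' ->
  exists F : set M, exists dl : R, [/\ finite_set F, 0 < dl &
    ev le (fun i => MapSet act d F dl (sigma i) `<=` MapSet act d' F' dl' (sigma i))].
Proof.
move=> cd gd cd' F' dl' fF' dl'0.
have [B [B0 hB]] := pm_bound cX cd'.
pose kappa := dl' / 2.
have k0 : 0 < kappa by rewrite divr_gt0.
have [ks [eta [eta0 HA]]] := unif_gen cX cact cd cd' gd k0.
have [fs hfs] := (finite_seqP F').1 fF'.
case: hs => dir [nD _] hmul _ hdel.
have [Dl [Dl1 hDl]] := hdel F' fF'.
pose L := size ks.
pose tau := dl' ^+ 2 / (4 * B ^+ 2 * (L%:R + 1)).
have den0 : 0 < 4 * B ^+ 2 * (L%:R + 1).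
  by apply: mulr_gt0; [apply: mulr_gt0 => //; exact: exprn_gt0|apply: ltr_pwDr].
have tau0 : 0 < tau by apply: divr_gt0 => //; exact: exprn_gt0.
have htau : tau * (4 * B ^+ 2 * (L%:R + 1)) = dl' ^+ 2 by rewrite divfK // gt_eqF.
pose A := (Dl%:R + 1) / (eta / 3) ^+ 2.
have A0 : 0 <= A by apply: divr_ge0; [apply: addr_ge0|exact: sqr_ge0].
have [dl [dl0 dl1 hdl]] := small_choice tau0 A0.
exists [set` (ks ++ [seq (k * m)%g | k <- ks, m <- fs])], dl; split => //.
have hev : ev le (fun i => forall p, p \in [seq (k, m) | k <- ks, m <- fs] ->
    d_ham R (sigma i (p.1 * p.2)%g) (sigma i p.1 \o sigma i p.2) < tau).
  apply: (ev_seq dir) => p _; have [i0 h0] := hmul p.1 p.2 tau tau0.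
  exists i0 => i /h0; rewrite subr0 => h; exact: le_lt_trans (ler_norm _) h.
apply: ev_imp hev => i hi phi hphi m Fm.
have mfs : m \in fs by move: Fm; rewrite hfs.
have Fk : forall k, k \in ks -> [set` (ks ++ [seq (k * m)%g | k <- ks, m <- fs])] k.
  by move=> k kin /=; rewrite mem_cat kin.
have Fkm : forall k, k \in ks -> [set` (ks ++ [seq (k * m)%g | k <- ks, m <- fs])] (k * m)%g.
  move=> k kin /=; rewrite mem_cat; apply/orP; right.
  exact: (allpairs_f (fun k m => (k * m)%g) kin mfs).
have core := step1_core actM cd.1 cd'.1 eta0 k0 HA hB (fun w => hDl i m w Fm) dl0 Fk Fkm hphi.
set n := #|D i|%:R in core.
have n0 : 0 < n by rewrite ltr0n.
set T := \sum_(k <- ks) _ in core.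
have T0 : 0 <= T.
  by apply: sumr_ge0 => k _; apply: addr_ge0; [apply: mulr_ge0; [apply: addr_ge0|apply: divr_ge0; [apply: mulr_ge0; [|exact: sqr_ge0]|exact: sqr_ge0]]|].
have hT : T <= L%:R * (2 * n * tau).
  rewrite -sum_const_seq /T big_seq [X in _ <= X]big_seq; apply: ler_sum => k kin.
  have hc := hi (k, m) (allpairs_f (fun k m => (k, m)) kin mfs).
  rewrite /d_ham /= ltr_pdivrMr // mulrC in hc.
  have -> : (Dl%:R + 1) * (n * dl ^+ 2 / (eta / 3) ^+ 2) = n * (A * dl ^+ 2) by rewrite /A; ring.
  apply: arith2 => //; exact: ltW.
have hS := arith1 n0 (ler0n _ _) T0 (ltW tau0) htau core hT.
rewrite /rho2; apply: le_trans (_ : Num.sqrt (dl' ^+ 2) <= dl').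
  rewrite ler_sqrt; last exact: sqr_ge0.
  by rewrite ler_pdivrMl.
by rewrite sqrtr_sqr ger0_norm // ltW.
Qed.

Lemma step2 (d d' : X -> X -> R) : continuous_pseudometric d -> continuous_pseudometric d' ->
  dynamically_generating act d' ->
  forall eps : R, 0 < eps -> exists eps' : R, 0 < eps' /\ exists ks : seq M,
  forall th : R, 0 < th -> exists dl2 : R, 0 < dl2 /\
   forall i (S : set (D i -> X)), S `<=` MapSet act d' [set` ks] dl2 (sigma i) ->
   exists C : R, [/\ 0 < C, ln C <= th * #|D i|%:R &
     (sep_number (@rhoinf R X d (D i)) eps S <=
        C%:E * sep_number (@rhoinf R X d' (D i)) eps' S)%E].
Proof.
move=> cd cd' gd' eps eps0.
have [ks [eta [eta0 HA]]] := unif_gen cX cact cd' cd gd' eps0.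
have e20 : 0 < eps / 2 by rewrite divr_gt0.
have [cs hcs] := fin_cover cX cd e20.
pose N := size cs.
pose P x := fun c => d c x < eps / 2.
pose cell := fun x => (inord (find (P x) cs).+1 : 'I_N.+1).
have hfind : forall x, (find (P x) cs < N)%N by move=> x; rewrite -has_find; exact: hcs.
have hcell0 : forall x, cell x != ord0.
  by move=> x; apply/eqP => /(congr1 val); rewrite /= inordK // ltnS hfind.
have hcell : forall x y, cell x = cell y -> d x y < eps.
  move=> x y /(congr1 val); rewrite /= !inordK ?ltnS ?hfind // => -[hf].
  have jx := hfind x.
  have hx := nth_find x (hcs x).
  have hy := nth_find y (hcs y).
  rewrite -hf (set_nth_default x y jx) in hy.
  move: hx hy; rewrite /P; set c := nth x cs _ => hx hy.
  case: cd => -[_ ds dt] _.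
  have := dt x c y; rewrite (ds x c).
  move: hx hy; generalize (d c x) (d c y) (d x y) => a b e ha hb he.
  lra.
exists (eta / 3); split; first by rewrite divr_gt0.
exists ks => th th0.
have th20 : 0 < th / 2 by rewrite divr_gt0.
have [t [t0 t1 ht]] := small_choice th20 (ler0n R N).
pose lt := - ln t.
have lt0 : 0 <= lt by rewrite /lt oppr_ge0; exact: ln_le0.
pose L := size ks.
have A20 : 0 <= L%:R * lt / (eta / 3) ^+ 2.
  by apply: divr_ge0; [apply: mulr_ge0|exact: sqr_ge0].
have [dl2 [dl20 dl21 hdl2]] := small_choice th20 A20.
exists dl2; split => // i S hS.
have nD : (0 < #|D i|)%N by case: hs => _ [nD0 _] _ _ _; exact: nD0.
have n0 : 0 < #|D i|%:R :> R by rewrite ltr0n.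
exists (Cst (D i) ks eta N t dl2); split.
- rewrite /Cst; apply: mulr_gt0; last exact: expR_gt0.
  apply: exprn_gt0; apply: ltr_pwDl => //; apply: mulr_ge0 => //; exact: ltW.
- have p1 : 0 < 1 + N%:R * t by apply: ltr_pwDl => //; apply: mulr_ge0 => //; exact: ltW.
  rewrite /Cst lnM ?posrE ?expR_gt0 ?exprn_gt0 // lnXn // expRK.
  have h1 : ln (1 + N%:R * t) <= th / 2.
    apply: le_trans ht; apply: le_ln1Dx.
    apply: lt_le_trans (_ : (-1 : R) < 0) _; first by rewrite oppr_lt0.
    by apply: mulr_ge0 => //; exact: ltW.
  have h2 : - (bnd (D i) ks eta dl2 * ln t) <= #|D i|%:R * (th / 2).
    have -> : - (bnd (D i) ks eta dl2 * ln t) =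
              #|D i|%:R * ((L%:R * lt / (eta / 3) ^+ 2) * dl2 ^+ 2).
      by rewrite /bnd sum_const_seq /lt /L; ring.
    apply: ler_wpM2l; first exact: ltW.
    apply: le_trans hdl2; rewrite [dl2 ^+ 2]expr2 mulrA; apply: ler_piMr => //.
    by apply: mulr_ge0 => //; exact: ltW.
  have h3 : #|D i|%:R * ln (1 + N%:R * t) <= #|D i|%:R * (th / 2).
    by apply: ler_wpM2l => //; exact: ltW.
  rewrite -[ln (1 + _) *+ _]mulr_natl.
  apply: le_trans (lerD h3 h2) _.
  by rewrite -mulrDr -splitr mulrC.
- exact: (sep_compare cd'.1 eta0 eps0 HA hcell hcell0 t0 t1 dl20 hS).
Qed.

Lemma mapset_mono (rho : X -> X -> R) (F1 F2 : set M) (e1 e2 : R) (Dt : finType)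
  (s : M -> Dt -> Dt) :
  F1 `<=` F2 -> e2 <= e1 -> MapSet act rho F2 e2 s `<=` MapSet act rho F1 e1 s.
Proof. by move=> hF he phi hphi m /hF /hphi h; exact: le_trans h he. Qed.

Lemma sep_mono (T : Type) (rho : T -> T -> R) (c : R) (S1 S2 : set T) :
  S1 `<=` S2 -> (sep_number rho c S1 <= sep_number rho c S2)%E.
Proof.
move=> h; apply: ereal_sup_le => _ [n [f [fi fS fsep]] <-].
by exists n => //; exists f; split => // j; apply: h.
Qed.

Lemma entropy_le (d d' : X -> X -> R) : continuous_pseudometric d ->
  dynamically_generating act d -> continuous_pseudometric d' ->
  dynamically_generating act d' ->
  (sofic_entropy act le sigma d <= sofic_entropy act le sigma d')%E.
Proof.
move=> cd gd cd' gd'.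
have dir : directed_set le by case: hs.
rewrite /sofic_entropy; apply: ge_ereal_sup => _ [eps eps0 <-].
have [eps' [eps'0 [ks h2]]] := step2 cd cd' gd' eps0.
apply: le_ereal_sup_tmp; eexists; first by exists eps'.
apply: le_ereal_inf_tmp => _ [F' fF' <-].
apply: le_ereal_inf_tmp => _ [dl' dl'0 <-].
apply/lee_addgt0Pr => th th0.
have [dl2 [dl20 h2']] := h2 th th0.
have fF'' : finite_set (F' `|` [set` ks]) by rewrite finite_setU; split => //; exact: finite_seq.
have dl''0 : 0 < Num.min dl' dl2 by rewrite lt_min dl'0 dl20.
have [F [dl [fF dl0 hev]]] := step1 cd gd cd' fF'' dl''0.
apply: ge_ereal_inf; eexists; first by exists F.
apply: ge_ereal_inf; eexists; first by exists dl.
rewrite addeC; apply: (limsup_le dir); apply: ev_imp hev => i hi.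
set S := MapSet act d F dl (sigma i).
have hS1 : S `<=` MapSet act d' [set` ks] dl2 (sigma i).
  apply: subset_trans hi _; apply: mapset_mono; first by move=> k kk; right.
  by rewrite ge_min lexx orbT.
have hS2 : S `<=` MapSet act d' F' dl' (sigma i).
  apply: subset_trans hi _; apply: mapset_mono; first by move=> k kk; left.
  by rewrite ge_min lexx.
have [C [C0 hC hsep]] := h2' i S hS1.
have hsep2 : (sep_number (@rhoinf R X d (D i)) eps S <=
    C%:E * sep_number (@rhoinf R X d' (D i)) eps' (MapSet act d' F' dl' (sigma i)))%E.
  apply: le_trans hsep _; apply: lee_wpmul2l; first by rewrite lee_fin ltW.
  exact: sep_mono.
have hl := elog_le C0 hsep2.
have nD : (0 < #|D i|)%N by case: hs => _ [nD0 _] _ _ _; exact: nD0.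
have n0 : 0 < #|D i|%:R^-1 :> R by rewrite invr_gt0 ltr0n.
have := scale_le n0 hl.
move=> h; apply: le_trans h _; rewrite leeD2r // lee_fin.
by rewrite mulrC ler_pdivrMr ?ltr0n.
Qed.

End Main.

Theorem proposition4p6 (R : realType) (M : monoidType) (X : topologicalType)
  (act : M -> X -> X)
  (I : Type) (le : I -> I -> Prop) (D : I -> finType)
  (sigma : forall i, M -> D i -> D i)
  (rho rho' : X -> X -> R) :
  compact [set: X] ->
  continuous_monoid_action act ->
  infinite_set [set: M] ->
  strongly_sofic R M ->
  strong_sofic_approx R le sigma ->
  continuous_pseudometric rho -> dynamically_generating act rho ->
  continuous_pseudometric rho' -> dynamically_generating act rho' ->
  sofic_entropy act le sigma rho = sofic_entropy act le sigma rho'.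
Proof.
move=> cX [cact _ actM] _ _ hs c1 g1 c2 g2.
apply/le_anti/andP; split.
- exact: (entropy_le cX cact actM hs c1 g1 c2 g2).
- exact: (entropy_le cX cact actM hs c2 g2 c1 g1).
Qed.
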